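(* The inquisitive disjunction $\vee$ is strongly undefinable in extended propositional dependence logic $\mathcal D^+$. Concretely: for every context $\varphi(a,b)$ of $\mathcal D^+$ and every pair of distinct propositional letters $p,q$ not occurring in $\varphi(a,b)$, letting $M_{pq}$ be the model with worlds $w_1,w_2,w_3$ in which $p$ is true exactly at $w_1,w_2$, $q$ is true exactly at $w_2,w_3$, and all other letters are false everywhere, we have $\varphi(=\!(p),=\!(q))\not\equiv_{M_{pq}}=\!(p)\vee=\!(q)$; in particular $\varphi(=\!(p),=\!(q))\not\equiv=\!(p)\vee=\!(q)$.
   Context: Formulas of $\mathcal D^+$: $\varphi::= p\mid\neg p\mid\bot\mid=\!(\alpha_1,\dots,\alpha_n;\beta)\mid\varphi\land\varphi\mid\varphi\otimes\varphi$, where $p$ is a propositional letter and $\alpha_1,\dots,\alpha_n,\beta$ are classical formulas (formulas built from $p,\neg p,\bot,\land,\otimes$ without dependence atoms); $=\!(\beta)$ denotes the case $n=0$. A context $\varphi(a,b)$ is a $\mathcal D^+$ formula in which the letters $a,b$ do not occur negated nor inside a dependence atom; $\varphi(\psi,\chi)$ replaces $a$ by $\psi$ and $b$ by $\chi$. A model is $M=(W,V)$, $V(w)$ the set of letters true at $w$. Support at $s\subseteq W$: $s\models p$ iff $p$ true at all $w\in s$; $s\models\neg p$ iff $p$ false at all $w\in s$; $s\models\bot$ iff $s=\emptyset$; $s\models\psi\land\chi$ iff both; $s\models\psi\otimes\chi$ iff $s=t_1\cup t_2$ with $t_1\models\psi$, $t_2\models\chi$; $s\models=\!(\alpha_1,\dots,\alpha_n;\beta)$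 iff for all $w,w'\in s$, if ($\{w\}\models\alpha_1\land\dots\land\alpha_n$ iff $\{w'\}\models\alpha_1\land\dots\land\alpha_n$) then ($\{w\}\models\beta$ iff $\{w'\}\models\beta$); $s\models\psi\vee\chi$ iff $s\models\psi$ or $s\models\chi$ (inquisitive disjunction, not in $\mathcal D^+$). $\psi\equiv_M\chi$: same supporting states in $M$; $\psi\equiv\chi$: $\psi\equiv_M\chi$ for all $M$. Strong undefinability of a binary connective $\circ$ means: there are formulas $\psi,\chi$ and a model $M$ such that for every template (here: context) $\varphi(a,b)$, $\varphi(\psi',\chi')\not\equiv_{M'}\psi'\circ\chi'$, where $\psi',\chi'$ differ from $\psi,\chi$ only by renaming of atoms and $M'$ is isomorphic to $M$. *)

(* Defs.v *)
From Stdlib Require Import List Arith.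
Import ListNotations.

Inductive form : Type :=
| Atom  : nat -> form
| NAtom : nat -> form
| Bot   : form
| Dep   : list form -> form -> form
| Conj  : form -> form -> form
| Tens  : form -> form -> form.

Fixpoint classical (f : form) : Prop :=
  match f with
  | Atom _ | NAtom _ | Bot => True
  | Dep _ _ => False
  | Conj f g | Tens f g => classical f /\ classical g
  end.

Fixpoint wf (f : form) : Prop :=
  match f with
  | Atom _ | NAtom _ | Bot => True
  | Dep l b => Forall classical l /\ classical b
  | Conj f g | Tens f g => wf f /\ wf g
  end.

Fixpoint occurs (n : nat) (f : form) : Prop :=
  match f with
  | Atom m | NAtom m => m = n
  | Bot => False
  | Dep l b =>
      (let fix occl (l : list form) : Prop :=
         match l with [] => False | x :: l' => occurs n x \/ occl l' end
       in occl l) \/ occurs n b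
  | Conj f g | Tens f g => occurs n f \/ occurs n g
  end.

Fixpoint bad_occ (n : nat) (f : form) : Prop :=
  match f with
  | Atom _ | Bot => False
  | NAtom m => m = n
  | Dep l b => occurs n (Dep l b)
  | Conj f g | Tens f g => bad_occ n f \/ bad_occ n g
  end.

Definition context (a b : nat) (phi : form) : Prop :=
  wf phi /\ ~ bad_occ a phi /\ ~ bad_occ b phi.

Fixpoint subst (a : nat) (psi : form) (b : nat) (chi : form) (f : form) : form :=
  match f with
  | Atom n => if Nat.eqb n a then psi else if Nat.eqb n b then chi else Atom n
  | NAtom n => NAtom n
  | Bot => Bot
  | Dep l be => Dep l be
  | Conj f g => Conj (subst a psi b chi f) (subst a psi b chi g)
  | Tens f g => Tens (subst a psi b chi f) (subst a psi b chi g)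
  end.

Fixpoint sup {W : Type} (V : W -> nat -> bool) (s : W -> Prop) (f : form) : Prop :=
  match f with
  | Atom p => forall w, s w -> V w p = true
  | NAtom p => forall w, s w -> V w p = false
  | Bot => forall w, ~ s w
  | Dep l be =>
      let fix supall (l : list form) (u : W -> Prop) : Prop :=
        match l with [] => True | x :: l' => sup V u x /\ supall l' u end in
      forall w w', s w -> s w' ->
        ((supall l (fun x => x = w) <-> supall l (fun x => x = w')) ->
         (sup V (fun x => x = w) be <-> sup V (fun x => x = w') be))
  | Conj f g => sup V s f /\ sup V s g
  | Tens f g => exists t1 t2 : W -> Prop,
      (forall w, s w <-> t1 w \/ t2 w) /\ sup V t1 f /\ sup V t2 g
  end.

Definition dep0 (p : nat) : form := Dep [] (Atom p).

Definition sup_idisj {W : Type} (V : W -> nat -> bool) (s : W -> Prop) (psi chi : form) : Prop :=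
  sup V s psi \/ sup V s chi.

Definition equiv_idisj_in {W : Type} (V : W -> nat -> bool) (f psi chi : form) : Prop :=
  forall s : W -> Prop, sup V s f <-> sup_idisj V s psi chi.

Inductive world3 : Type := w1 | w2 | w3.

Definition V_pq (p q : nat) (w : world3) (n : nat) : bool :=
  orb (andb (Nat.eqb n p) (match w with w1 | w2 => true | w3 => false end))
      (andb (Nat.eqb n q) (match w with w2 | w3 => true | w1 => false end)).

(* Main.v *)
Require Import Defs.
From Stdlib Require Import List Arith Classical.
Import ListNotations.

Section S.
Variables p q : nat.
Hypothesis pq : p <> q.
Local Notation Vm := (V_pq p q).

Lemma Vfalse : forall w n, n <> p -> n <> q -> Vm w n = false.
Proof.
  intros w n h1 h2. unfold V_pq.
  apply Nat.eqb_neq in h1. apply Nat.eqb_neq in h2. rewrite h1, h2. reflexivity.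
Qed.

Lemma L1 : forall f, classical f -> ~ occurs p f -> ~ occurs q f ->
  forall s s' : world3 -> Prop, ((exists w, s w) <-> (exists w, s' w)) ->
  (sup Vm s f <-> sup Vm s' f).
Proof.
  induction f; simpl; intros Hc Hp Hq s s' Hs.
  - split; intros H w Hw; exfalso;
    [destruct (proj2 Hs (ex_intro _ w Hw)) as [x Hx] | destruct (proj1 Hs (ex_intro _ w Hw)) as [x Hx]];
    specialize (H x Hx); rewrite Vfalse in H by auto; discriminate.
  - split; intros H w Hw; apply Vfalse; auto.
  - split; intros H w Hw;
    [destruct (proj2 Hs (ex_intro _ w Hw)) as [x Hx] | destruct (proj1 Hs (ex_intro _ w Hw)) as [x Hx]];
    eapply H; eauto.
  - contradiction.
  - destruct Hc. rewrite (IHf1 H ltac:(tauto) ltac:(tauto) s s' Hs), (IHf2 H0 ltac:(tauto) ltac:(tauto) s s' Hs). tauto.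
  - destruct Hc as [c1 c2].
    assert (key : forall s s', ((exists w, s w) <-> (exists w, s' w)) ->
      (exists t1 t2 : world3 -> Prop, (forall w, s w <-> t1 w \/ t2 w) /\ sup Vm t1 f1 /\ sup Vm t2 f2) ->
      (exists t1 t2 : world3 -> Prop, (forall w, s' w <-> t1 w \/ t2 w) /\ sup Vm t1 f1 /\ sup Vm t2 f2)).
    { clear s s' Hs. intros s s' Hs [t1 [t2 [Hu [H1 H2]]]].
      pose (t1' := fun w => s' w /\ exists x, t1 x).
      pose (t2' := fun w => s' w /\ exists x, t2 x).
      exists t1', t2'. split; [|split].
      + intro w. unfold t1', t2'. split.
        * intro Hw. destruct (proj2 Hs (ex_intro _ w Hw)) as [x Hx].
          destruct (proj1 (Hu x) Hx); [left|right]; eauto.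
        * tauto.
      + rewrite (IHf1 c1 ltac:(tauto) ltac:(tauto) t1' t1); auto.
        unfold t1'. split; [intros [x [_ H]]; exact H|].
        intros [x Hx]. assert (exists w, s w) as Hs1 by (exists x; apply Hu; auto).
        destruct (proj1 Hs Hs1) as [y Hy]. exists y. split; eauto.
      + rewrite (IHf2 c2 ltac:(tauto) ltac:(tauto) t2' t2); auto.
        unfold t2'. split; [intros [x [_ H]]; exact H|].
        intros [x Hx]. assert (exists w, s w) as Hs1 by (exists x; apply Hu; auto).
        destruct (proj1 Hs Hs1) as [y Hy]. exists y. split; eauto. }
    split; apply key; [exact Hs|]. split; apply Hs.
Qed.

Fixpoint supall (l : list form) (u : world3 -> Prop) : Prop :=
  match l with [] => True | x :: l' => sup Vm u x /\ supall l' u end.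

Definition occl (n : nat) := fix occl (l : list form) : Prop :=
  match l with [] => False | x :: l' => occurs n x \/ occl l' end.

Lemma supall_const : forall l, Forall classical l -> ~ occl p l -> ~ occl q l ->
  forall w w', (supall l (fun x => x = w) <-> supall l (fun x => x = w')).
Proof.
  induction l; simpl; intros Hc Hp Hq w w'. tauto.
  inversion Hc; subst.
  rewrite (L1 a H1 ltac:(tauto) ltac:(tauto) (fun x => x = w) (fun x => x = w')).
  - rewrite (IHl H2 ltac:(tauto) ltac:(tauto) w w'). tauto.
  - split; intros _; eauto.
Qed.

Lemma dep_true : forall l be, Forall classical l -> classical be ->
  ~ occurs p (Dep l be) -> ~ occurs q (Dep l be) -> forall s, sup Vm s (Dep l be).
Proof.
  intros l be Hl Hb Hp Hq s.
  change (~ (occl p l \/ occurs p be)) in Hp.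
  change (~ (occl q l \/ occurs q be)) in Hq.
  change (forall w w', s w -> s w' ->
        ((supall l (fun x => x = w) <-> supall l (fun x => x = w')) ->
         (sup Vm (fun x => x = w) be <-> sup Vm (fun x => x = w') be))).
  intros w w' _ _ _. apply L1; auto. split; intros _; eauto.
Qed.

Definition Inv (F : (world3 -> Prop) -> Prop) : Prop :=
  F (fun _ => False) /\
  (forall s s', (forall w, s' w -> s w) -> F s -> F s') /\
  ((exists s w, F s /\ s w) -> forall w, F (fun x => x = w)) /\
  (F (fun x => x = w1 \/ x = w2) -> F (fun x => x = w2 \/ x = w3) -> F (fun x => x = w1 \/ x = w3)).

Lemma Inv_conj : forall F G, Inv F -> Inv G -> Inv (fun s => F s /\ G s).
Proof.
  unfold Inv; intros F G [a1 [b1 [c1 d1]]] [a2 [b2 [c2 d2]]].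
  split; [tauto|]. split; [intros; split; [eapply b1|eapply b2]; eauto; tauto|].
  split; [|tauto].
  intros [s [w [[H1 H2] H3]]] w0. split; [apply c1|apply c2]; eauto.
Qed.

Definition tens (F G : (world3 -> Prop) -> Prop) s :=
  exists t1 t2 : world3 -> Prop, (forall w, s w <-> t1 w \/ t2 w) /\ F t1 /\ G t2.

Lemma Inv_tens : forall F G, Inv F -> Inv G -> Inv (tens F G).
Proof.
  unfold Inv, tens; intros F G [a1 [b1 [c1 d1]]] [a2 [b2 [c2 d2]]].
  split; [exists (fun _ => False), (fun _ => False); tauto|].
  split.
  { intros s s' Hs [t1 [t2 [Hu [H1 H2]]]].
    exists (fun w => s' w /\ t1 w), (fun w => s' w /\ t2 w). split; [|split].
    - intro w. split; [intro Hw; specialize (Hs w Hw); apply Hu in Hs; tauto | tauto].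
    - eapply b1; [|exact H1]. simpl; tauto.
    - eapply b2; [|exact H2]. simpl; tauto. }
  split.
  { intros [s [w [[t1 [t2 [Hu [H1 H2]]]] Hw]]] w0.
    apply Hu in Hw. destruct Hw as [Hw|Hw].
    - exists (fun x => x = w0), (fun _ => False). split; [tauto|]. split; [apply c1; eauto|auto].
    - exists (fun _ => False), (fun x => x = w0). split; [tauto|]. split; [auto|apply c2; eauto]. }
  intros H12 H23.
  destruct (classic (exists s w, F s /\ s w)) as [nF|nF];
  destruct (classic (exists s w, G s /\ s w)) as [nG|nG].
  - exists (fun x => x = w1), (fun x => x = w3). split; [tauto|].
    split; [apply c1; auto | apply c2; auto].
  - assert (E : forall s, (exists t1 t2 : world3 -> Prop, (forall w, s w <-> t1 w \/ t2 w) /\ F t1 /\ G t2) -> F s).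
    { intros s [t1 [t2 [Hu [H1 H2]]]]. eapply b1; [|exact H1].
      intros w Hw. apply Hu in Hw. destruct Hw; auto. exfalso; apply nG; eauto. }
    exists (fun x => x = w1 \/ x = w3), (fun _ => False). split; [tauto|].
    split; auto.
  - assert (E : forall s, (exists t1 t2 : world3 -> Prop, (forall w, s w <-> t1 w \/ t2 w) /\ F t1 /\ G t2) -> G s).
    { intros s [t1 [t2 [Hu [H1 H2]]]]. eapply b2; [|exact H2].
      intros w Hw. apply Hu in Hw. destruct Hw; auto. exfalso; apply nF; eauto. }
    exists (fun _ => False), (fun x => x = w1 \/ x = w3). split; [tauto|].
    split; auto.
  - exfalso. 
    destruct H12 as [t1 [t2 [Hu [H1 H2]]]].
    destruct (proj1 (Hu w1) (or_introl eq_refl)); [apply nF|apply nG]; eauto.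
Qed.

Lemma Inv_ext : forall F G, Inv F -> (forall s, G s <-> F s) -> Inv G.
Proof.
  unfold Inv; intros F G [a [b [c d]]] E.
  split; [apply E; auto|]. split; [intros s s' h; rewrite !E; eauto|].
  split; [intros [s [w [H1 H2]]] w0; apply E; apply c; exists s, w; rewrite <- E; auto|].
  rewrite !E; auto.
Qed.

Lemma Vp : forall w, Vm w p = match w with w1 | w2 => true | w3 => false end.
Proof.
  intros w; unfold V_pq. rewrite Nat.eqb_refl.
  assert (Nat.eqb p q = false) as -> by (apply Nat.eqb_neq; auto).
  destruct w; reflexivity.
Qed.

Lemma Vq : forall w, Vm w q = match w with w1 => false | w2 | w3 => true end.
Proof.
  intros w; unfold V_pq. rewrite Nat.eqb_refl.
  assert (Nat.eqb q p = false) as -> by (apply Nat.eqb_neq; auto).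
  destruct w; reflexivity.
Qed.

Lemma sing_atom : forall w n, sup Vm (fun x => x = w) (Atom n) <-> Vm w n = true.
Proof. simpl; intros; split; intros H; [apply H; auto | intros; subst; auto]. Qed.

Lemma dep0_eq : forall r s, sup Vm s (dep0 r) <->
  (forall w w', s w -> s w' -> (Vm w r = true <-> Vm w' r = true)).
Proof.
  intros r s. unfold dep0. simpl.
  split; intros H w w' h1 h2; specialize (H w w' h1 h2).
  - assert (H' := H (conj (fun x => x) (fun x => x))).
    split; intro K; [apply (proj1 H'); intros; subst; auto | apply (proj2 H'); intros; subst; auto].
  - intros _. split; intros K x Hx; subst; [apply H, K | apply H, K]; auto.
Qed.

Lemma Inv_dep0p : Inv (fun s => sup Vm s (dep0 p)).
Proof.
  unfold Inv. setoid_rewrite dep0_eq.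
  split; [tauto|]. split; [intros; eauto|]. split.
  - intros _ w0 w w' h1 h2; subst; tauto.
  - intros _ H. exfalso. specialize (H w2 w3 ltac:(auto) ltac:(auto)).
    rewrite !Vp in H. destruct H as [H _]. discriminate (H eq_refl).
Qed.

Lemma Inv_dep0q : Inv (fun s => sup Vm s (dep0 q)).
Proof.
  unfold Inv. setoid_rewrite dep0_eq.
  split; [tauto|]. split; [intros; eauto|]. split.
  - intros _ w0 w w' h1 h2; subst; tauto.
  - intros H _. exfalso. specialize (H w1 w2 ltac:(auto) ltac:(auto)).
    rewrite !Vq in H. destruct H as [_ H]. discriminate (H eq_refl).
Qed.

Lemma main : forall a b phi, wf phi -> ~ occurs p phi -> ~ occurs q phi ->
  Inv (fun s => sup Vm s (subst a (dep0 p) b (dep0 q) phi)).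
Proof.
  induction phi; simpl; intros Hw Hp Hq.
  - destruct (Nat.eqb n a). apply Inv_dep0p.
    destruct (Nat.eqb n b). apply Inv_dep0q.
    simpl. assert (Hf : forall w, V_pq p q w n = false) by (intro; apply Vfalse; auto).
    unfold Inv. split; [tauto|]. split; [intros s s' h H w0 Hw0; eauto|].
    split.
    + intros [s [w [H1 H2]]]. specialize (H1 w H2). rewrite Hf in H1. discriminate.
    + intros H. exfalso. specialize (H w1 (or_introl eq_refl)). rewrite Hf in H. discriminate.
  - assert (Hf : forall w, V_pq p q w n = false) by (intro; apply Vfalse; auto).
    unfold Inv; simpl.
    split; [auto|]. split; [auto|]. split; auto.
  - unfold Inv; simpl. split; [tauto|]. split; [intros s s' h H w Hw'; exact (H w (h w Hw'))|]. split.
    + intros [s [w [H1 H2]]]. exfalso; eapply H1; eauto.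
    + intros H. exfalso. apply (H w1); auto.
  - destruct Hw as [Hl Hb].
    assert (T : forall s, sup Vm s (Dep l phi)) by (intro s; apply dep_true; auto).
    unfold Inv. split; [apply T| split; [intros s s' _ _; apply T | split; [intros _ w; apply T | intros _ _; apply T]]].
  - apply Inv_conj; [apply IHphi1|apply IHphi2]; tauto.
  - apply (Inv_tens _ _ (IHphi1 ltac:(tauto) ltac:(tauto) ltac:(tauto))
                        (IHphi2 ltac:(tauto) ltac:(tauto) ltac:(tauto))).
Qed.

Lemma first : forall a b phi, wf phi -> ~ occurs p phi -> ~ occurs q phi ->
  ~ equiv_idisj_in Vm (subst a (dep0 p) b (dep0 q) phi) (dep0 p) (dep0 q).
Proof.
  intros a b phi Hw Hp Hq E.
  destruct (main a b phi Hw Hp Hq) as [_ [_ [_ I2]]].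
  unfold equiv_idisj_in, sup_idisj in E. setoid_rewrite dep0_eq in E.
  rewrite !E in I2.
  destruct I2 as [H|H].
  - left. intros w w' h1 h2. destruct h1, h2; subst; rewrite !Vp; tauto.
  - right. intros w w' h1 h2. destruct h1, h2; subst; rewrite !Vq; tauto.
  - specialize (H w1 w3 ltac:(auto) ltac:(auto)). rewrite !Vp in H.
    destruct H as [H _]. discriminate (H eq_refl).
  - specialize (H w1 w3 ltac:(auto) ltac:(auto)). rewrite !Vq in H.
    destruct H as [_ H]. discriminate (H eq_refl).
Qed.
End S.

Theorem theorem7 :
  forall (a b : nat) (phi : form) (p q : nat),
    a <> b -> context a b phi ->
    p <> q -> ~ occurs p phi -> ~ occurs q phi ->
    ~ equiv_idisj_in (V_pq p q) (subst a (dep0 p) b (dep0 q) phi) (dep0 p) (dep0 q)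
    /\ ~ (forall (W : Type) (V : W -> nat -> bool),
            equiv_idisj_in V (subst a (dep0 p) b (dep0 q) phi) (dep0 p) (dep0 q)).
Proof.
  intros a b phi p q _ [Hw _] pq Hp Hq.
  pose proof (first p q pq a b phi Hw Hp Hq) as H.
  split; [exact H|]. intro A. apply H, A.
Qed.
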